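(* Let $n\geq2$. For $\sigma>0$ let $u_\sigma:[0,\infty)\to\mathbb{R}^+$ denote the unique smooth solution of $$u''(x)=\Big[\frac{xu'(x)-u(x)}{2}+\frac{n-1}{u(x)}\Big]\big(1+(u'(x))^2\big)$$ that is asymptotic to the ray $x\mapsto\sigma x$ as $x\to+\infty$. Then for all sufficiently large $\sigma>0$, $u_\sigma$ has positive slope ($u_\sigma'>0$) on $[0,\infty)$.
   Context: For each $\sigma>0$ such a solution $u_\sigma$ exists and is unique; it satisfies $u_\sigma(x)>\sigma x$ and $|u_\sigma(x)-\sigma x|=O(1/x)$ as $x\to\infty$. *)

(* Defs.v *)
From Stdlib Require Import Reals.
From Coquelicot Require Import Coquelicot.
Open Scope R_scope.

Definition smooth_on_nonneg (u : R -> R) : Prop :=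
  exists eps : R, 0 < eps /\ forall (k : nat) (x : R), - eps < x -> ex_derive_n u k x.

Definition expander_ode (n : nat) (u : R -> R) : Prop :=
  forall x : R, 0 <= x ->
    Derive_n u 2 x =
      ((x * Derive u x - u x) / 2 + (INR n - 1) / u x) * (1 + (Derive u x) ^ 2).

Definition is_u_sigma (n : nat) (sigma : R) (u : R -> R) : Prop :=
  smooth_on_nonneg u /\
  (forall x : R, 0 <= x -> 0 < u x) /\
  expander_ode n u /\
  is_lim (fun x => u x - sigma * x) p_infty 0.

(* Main.v *)
Require Import Defs.
From Stdlib Require Import Reals Lra Lia.
From Coquelicot Require Import Coquelicot.
Open Scope R_scope.

Lemma cont_of_der (f : R -> R) x : ex_derive f x -> continuity_pt f x.
Proof. intros H. apply continuity_pt_filterlim. exact (ex_derive_continuous f x H). Qed.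

Lemma mono_le (f df : R -> R) a b : a <= b ->
  (forall x, a <= x <= b -> is_derive f x (df x)) ->
  (forall x, a <= x <= b -> 0 <= df x) -> f a <= f b.
Proof.
  intros Hab Hd Hp.
  destruct (MVT_gen f a b df) as [c [Hc Heq]].
  - intros x Hx. rewrite Rmin_left in Hx by lra. rewrite Rmax_right in Hx by lra. apply Hd; lra.
  - intros x Hx. rewrite Rmin_left in Hx by lra. rewrite Rmax_right in Hx by lra.
    apply cont_of_der. eexists. apply Hd; lra.
  - rewrite Rmin_left in Hc by lra. rewrite Rmax_right in Hc by lra.
    specialize (Hp c Hc). nra.
Qed.

Lemma mono_lt (f df : R -> R) a b : a < b ->
  (forall x, a <= x <= b -> is_derive f x (df x)) ->
  (forall x, a <= x <= b -> 0 < df x) -> f a < f b.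
Proof.
  intros Hab Hd Hp.
  destruct (MVT_gen f a b df) as [c [Hc Heq]].
  - intros x Hx. rewrite Rmin_left in Hx by lra. rewrite Rmax_right in Hx by lra. apply Hd; lra.
  - intros x Hx. rewrite Rmin_left in Hx by lra. rewrite Rmax_right in Hx by lra.
    apply cont_of_der. eexists. apply Hd; lra.
  - rewrite Rmin_left in Hc by lra. rewrite Rmax_right in Hc by lra.
    specialize (Hp c Hc). nra.
Qed.

Lemma min_right (f : R -> R) b l d : is_derive f b l -> 0 < d ->
  (forall y, b < y < b + d -> f b <= f y) -> 0 <= l.
Proof.
  intros Hd Hdp Hm. apply is_derive_Reals in Hd.
  destruct (Rle_or_lt 0 l) as [|Hl]; auto. exfalso.
  destruct (Hd (- l) ltac:(lra)) as [[de Hde] Hq].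
  set (h := Rmin d de / 2).
  assert (Hh : 0 < h /\ h < d /\ h < de).
  { unfold h. assert (Rmin d de <= d) by apply Rmin_l. assert (Rmin d de <= de) by apply Rmin_r. assert (0 < Rmin d de) by (apply Rmin_pos; lra). lra. }
  assert (Hr := Hq h ltac:(lra) ltac:(simpl; rewrite Rabs_right; lra)).
  apply Rabs_def2 in Hr.
  assert (0 <= (f (b + h) - f b) / h).
  { apply Rmult_le_pos. - specialize (Hm (b+h) ltac:(lra)); lra.
    - left; apply Rinv_0_lt_compat; lra. }
  lra.
Qed.

Lemma min_left (f : R -> R) b l d : is_derive f b l -> 0 < d ->
  (forall y, b - d < y < b -> f b <= f y) -> l <= 0.
Proof.
  intros Hd Hdp Hm. apply is_derive_Reals in Hd.
  destruct (Rle_or_lt l 0) as [|Hl]; auto. exfalso.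
  destruct (Hd l ltac:(lra)) as [[de Hde] Hq].
  set (h := Rmin d de / 2).
  assert (Hh : 0 < h /\ h < d /\ h < de).
  { unfold h. assert (Rmin d de <= d) by apply Rmin_l. assert (Rmin d de <= de) by apply Rmin_r. assert (0 < Rmin d de) by (apply Rmin_pos; lra). lra. }
  assert (Hr := Hq (-h) ltac:(lra) ltac:(simpl; rewrite Rabs_left; lra)).
  apply Rabs_def2 in Hr.
  assert (0 <= (f (b + - h) - f b) / h).
  { apply Rmult_le_pos. - specialize (Hm (b+-h) ltac:(lra)); lra.
    - left; apply Rinv_0_lt_compat; lra. }
  replace ((f (b + - h) - f b) / - h) with (- ((f (b + - h) - f b) / h)) in Hr by (field; lra).
  lra.
Qed.

Lemma lim_ev (g : R -> R) : is_lim g p_infty 0 ->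
  forall e, 0 < e -> exists M, forall y, M < y -> Rabs (g y) < e.
Proof.
  intros H e He. apply is_lim_spec in H. specialize (H (mkposreal e He)). simpl in H.
  destruct H as [M HM]. exists M. intros y Hy. specialize (HM y Hy). rewrite Rminus_0_r in HM. exact HM.
Qed.
Definition Hyp (k:nat) (s:R) (u:R->R) (eps:R) : Prop :=
  0 < eps /\ (forall x, -eps < x -> ex_derive u x) /\ (forall x, -eps < x -> ex_derive (Derive u) x) /\
  (forall x, 0 <= x -> 0 < u x) /\
  (forall x, 0 <= x -> Derive (Derive u) x = ((x*Derive u x - u x)/2 + INR (S k)/u x)*(1+Derive u x^2)) /\
  (forall e, 0 < e -> exists M, forall y, M < y -> Rabs (u y - s*y) < e) /\ 0 < s.

Lemma w_neg k s u eps : Hyp k s u eps -> forall x, 0 <= x -> x * Derive u x - u x < 0.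
Proof.
  intros [Heps [D1 [D2 [Hpos [Hode [Hlim Hs]]]]]] x1 Hx1.
  destruct (Rlt_or_le (x1 * Derive u x1 - u x1) 0) as [|Hw]; [auto|exfalso].
  destruct Hx1 as [Hx1|Hx1]; [|subst x1; specialize (Hpos 0 (Rle_refl 0)); lra].
  set (a := fun t => t * (1 + Derive u t ^ 2) / 2).
  assert (ca : forall t, -eps < t -> continuous a t).
  { intros t Ht. apply (ex_derive_continuous a t). unfold a. auto_derive.
    apply (D2 t); lra. }
  set (A := fun y => RInt a x1 y).
  assert (dA : forall x, 0 < x -> is_derive A x (a x)).
  { intros x Hx. apply (is_derive_RInt a A x1 x).
    - apply filter_imp with (P := fun y => 0 < y).
      + intros y Hy. apply (RInt_correct a x1 y). apply (ex_RInt_continuous a x1 y). intros z Hz.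
        apply ca. assert (Rmin x1 y <= z) by apply Hz. 
        assert (0 < Rmin x1 y) by (apply Rmin_pos; lra). lra.
      + apply open_gt. exact Hx.
    - apply ca. lra. }
  set (P := fun y => (y * Derive u y - u y) * exp (- A y)).
  assert (dP : forall x, 0 < x -> is_derive P x (x * INR (S k) / u x * (1 + Derive u x ^ 2) * exp (- A x))).
  { intros x Hx.
    assert (Hux := Hpos x ltac:(lra)).
    assert (HA := is_derive_unique _ _ _ (dA x Hx)).
    unfold P. auto_derive.
    - repeat split; try (apply D1; lra); try (apply D2; lra). exists (a x). apply dA; lra.
    - change (Derive (fun x0 => u x0) x) with (Derive u x).
      change (Derive (fun x0 => Derive u x0) x) with (Derive (Derive u) x).
      change (Derive (fun x0 => A x0) x) with (Derive A x).
      rewrite HA. rewrite (Hode x ltac:(lra)). unfold a. field. lra. }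
  assert (dPpos : forall x, 0 < x -> 0 < x * INR (S k) / u x * (1 + Derive u x ^ 2) * exp (- A x)).
  { intros x Hx. assert (Hux := Hpos x ltac:(lra)). assert (0 < INR (S k)) by (apply lt_0_INR; lia).
    apply Rmult_lt_0_compat; [|apply exp_pos].
    apply Rmult_lt_0_compat; [|nra].
    apply Rdiv_lt_0_compat; [nra|lra]. }
  set (dfP := fun x => x * INR (S k) / u x * (1 + Derive u x ^ 2) * exp (- A x)).
  set (x2 := x1 + 1).
  assert (HP1 : 0 <= P x1). { unfold P. apply Rmult_le_pos; [lra|left; apply exp_pos]. }
  assert (HP2 : P x1 < P x2).
  { apply (mono_lt P dfP x1 x2); [unfold x2; lra| |].
    - intros x Hx. apply (dP x). lra.
    - intros x Hx. apply (dPpos x). lra. }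
  set (C := P x2 * exp (A x2)).
  assert (HC : 0 < C). { unfold C. apply Rmult_lt_0_compat; [lra|apply exp_pos]. }
  assert (Hwge : forall x, x2 <= x -> C <= x * Derive u x - u x).
  { intros x Hx.
    assert (P x2 <= P x).
    { apply (mono_le P dfP x2 x); [lra| |].
      - intros y Hy. apply (dP y). unfold x2 in *. lra.
      - intros y Hy. left. apply (dPpos y). unfold x2 in *. lra. }
    assert (A x2 <= A x).
    { apply (mono_le A a x2 x); [lra| |].
      - intros y Hy. apply dA. unfold x2 in *. lra.
      - intros y Hy. unfold a. assert (0 <= Derive u y ^ 2) by (apply pow2_ge_0).
        unfold x2 in *. nra. }
    assert (exp (A x2) <= exp (A x)).
    { destruct H0 as [H0|H0]; [left; apply exp_increasing; auto| rewrite H0; lra]. }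
    replace (x * Derive u x - u x) with (P x * exp (A x)).
    2:{ unfold P. rewrite Rmult_assoc, <- exp_plus. replace (- A x + A x) with 0 by ring. rewrite exp_0. ring. }
    unfold C. assert (0 < exp (A x2)) by apply exp_pos. nra. }
  destruct (Hlim (C/8) ltac:(lra)) as [M HM].
  set (X := Rmax M x2 + 1).
  assert (HX : M < X /\ x2 < X). { unfold X. split; [assert (M <= Rmax M x2) by apply Rmax_l|assert (x2 <= Rmax M x2) by apply Rmax_r]; lra. }
  assert (HX0 : 0 < X) by (unfold x2 in *; lra).
  set (g := fun y => u y - s * y).
  destruct (MVT_gen g X (3 * X) (fun y => Derive u y - s)) as [xi [Hxi Heq]].
  - intros y Hy. rewrite Rmin_left in Hy by lra. rewrite Rmax_right in Hy by lra.
    unfold g. auto_derive. + first [apply (D1 y); lra | split; [apply (D1 y); lra|auto]]. + change (Derive (fun x0 => u x0) y) with (Derive u y). ring.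
  - intros y Hy. rewrite Rmin_left in Hy by lra. rewrite Rmax_right in Hy by lra.
    apply cont_of_der. unfold g. auto_derive. first [apply (D1 y); lra | split; [apply (D1 y); lra|auto]].
  - rewrite Rmin_left in Hxi by lra. rewrite Rmax_right in Hxi by lra.
    assert (H1 := HM X ltac:(lra)). assert (H2 := HM (3 * X) ltac:(lra)). assert (H3 := HM xi ltac:(lra)).
    apply Rabs_def2 in H1. apply Rabs_def2 in H2. apply Rabs_def2 in H3.
    assert (H4 := Hwge xi ltac:(lra)). unfold g in Heq.
    assert (Hk : xi * (Derive u xi - s) >= 7 * C / 8) by nra.
    assert (Hpos' : 0 < Derive u xi - s) by nra.
    nra.
Qed.

Lemma u_ge k s u eps : Hyp k s u eps -> forall x, 0 <= x -> s * x <= u x.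
Proof.
  intros HH. assert (Hw := w_neg k s u eps HH).
  destruct HH as [Heps [D1 [D2 [Hpos [Hode [Hlim Hs]]]]]].
  intros x [Hx|Hx]; [|subst x; specialize (Hpos 0 (Rle_refl 0)); lra].
  destruct (Rle_or_lt (s * x) (u x)) as [|Hlt]; auto. exfalso.
  set (q := u x / x).
  assert (Hq : q < s). { unfold q. apply Rmult_lt_reg_r with x; auto. field_simplify; lra. }
  destruct (Hlim ((s - q) * x) ltac:(nra)) as [M HM].
  set (y := Rmax M x + 1).
  assert (Hy : M < y /\ x < y). { unfold y. split; [assert (M <= Rmax M x) by apply Rmax_l|assert (x <= Rmax M x) by apply Rmax_r]; lra. }
  assert (Hqy : - q <= - (u y / y)).
  { unfold q. replace (- (u x / x)) with ((fun t => - (u t / t)) x) by reflexivity.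
    apply (mono_le (fun t => - (u t / t)) (fun t => - (Derive u t * t - u t) / t ^ 2) x y); [lra| |].
    - intros t Ht. auto_derive.
      + split; [apply (D1 t); lra|lra].
      + change (Derive (fun x0 => u x0) t) with (Derive u t). field. lra.
    - intros t Ht. assert (Hwt := Hw t ltac:(lra)).
      unfold Rdiv. apply Rmult_le_pos; [lra|]. left. apply Rinv_0_lt_compat. apply pow_lt; lra. }
  assert (Huy : u y <= q * y).
  { assert (u y / y * y = u y) by (field; lra). nra. }
  specialize (HM y ltac:(lra)). apply Rabs_def2 in HM. nra.
Qed.

Lemma slope_pos k s u eps : Hyp k s u eps -> 4 * INR (S k) < s ->
  forall x0, 0 <= x0 -> 0 < Derive u x0.
Proof.
  intros HH Hs4. assert (Hw := w_neg k s u eps HH). assert (Hge := u_ge k s u eps HH).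
  destruct HH as [Heps [D1 [D2 [Hpos [Hode [Hlim Hs]]]]]].
  intros x0 Hx0. destruct (Rlt_or_le 0 (Derive u x0)) as [|Hd0]; auto. exfalso.
  assert (Hm : 0 < INR (S k)) by (apply lt_0_INR; lia).
  set (X' := x0 + u x0 / s + 1).
  assert (Hfar : forall y, X' <= y -> u x0 < u y).
  { intros y Hy. assert (H1 := Hge y ltac:(unfold X' in Hy; assert (0 <= u x0 / s) by (apply Rdiv_le_0_compat; [left; apply Hpos|]; lra); lra)).
    assert (Hu0 := Hpos x0 Hx0).
    assert (s * (u x0 / s) = u x0) by (field; lra). unfold X' in Hy. nra. }
  destruct (continuity_ab_min u x0 X') as [b [Hb Hbr]].
  { unfold X'. assert (0 <= u x0 / s) by (apply Rdiv_le_0_compat; [left; apply Hpos|]; lra). lra. }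
  { intros c Hc. apply cont_of_der. apply D1. lra. }
  assert (Hmin : forall y, x0 <= y -> u b <= u y).
  { intros y Hy. destruct (Rle_or_lt y X') as [Hy'|Hy'].
    - apply Hb; lra.
    - assert (u b <= u x0) by (apply Hb; unfold X'; assert (0 <= u x0 / s) by (apply Rdiv_le_0_compat; [left; apply Hpos|]; lra); lra).
      assert (u x0 < u y) by (apply Hfar; lra). lra. }
  assert (Hdb : Derive u b = 0).
  { assert (H1 : 0 <= Derive u b).
    { apply (min_right u b (Derive u b) 1); [apply Derive_correct; apply D1; lra|lra|].
      intros y Hy. apply Hmin. lra. }
    destruct (Req_dec b x0) as [->|Hne]; [lra|].
    assert (H2 : Derive u b <= 0).
    { apply (min_left u b (Derive u b) (b - x0)); [apply Derive_correct; apply D1; lra|lra|].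
      intros y Hy. apply Hmin. lra. }
    lra. }
  set (r0 := u b).
  assert (Hr0 : 0 < r0) by (apply Hpos; lra).
  assert (Hr : forall y, b <= y -> r0 <= u y) by (intros y Hy; apply Hmin; lra).
  set (m := S k).
  set (H2 := fun y => (u y ^ m) ^ 2 / (1 + Derive u y ^ 2)).
  set (dH2 := fun y => - Derive u y * (u y ^ m) ^ 2 * (y * Derive u y - u y) / (1 + Derive u y ^ 2)).
  assert (HdH2 : forall y, 0 <= y -> is_derive H2 y (dH2 y)).
  { intros y Hy. assert (Huy := Hpos y Hy).
    assert (0 < 1 + Derive u y ^ 2) by (assert (0 <= Derive u y ^ 2) by apply pow2_ge_0; lra).
    unfold H2, dH2. auto_derive.
    - repeat split; try (apply (D1 y); lra); try (apply (D2 y); lra); lra.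
    - change (Derive (fun x0 => u x0) y) with (Derive u y).
      change (Derive (fun x0 => Derive u x0) y) with (Derive (Derive u) y).
      rewrite (Hode y Hy). unfold m. change (match k with 0%nat => 1 | S _ => INR k + 1 end) with (INR (S k)). rewrite S_INR. simpl. field. repeat split; lra. }
  assert (Hbound : forall x, b <= x -> r0 ^ m * Derive u x <= u x ^ m).
  { intros x Hx. assert (Hux := Hpos x ltac:(lra)).
    assert (0 < r0 ^ m) by (apply pow_lt; lra). assert (0 < u x ^ m) by (apply pow_lt; lra).
    destruct (Rle_or_lt (Derive u x) 0) as [Hdx|Hdx]; [nra|].
    assert (Hbx : b < x). { destruct Hx as [Hx|Hx]; auto. subst x. lra. }
    assert (Hkey : (r0 ^ m) ^ 2 <= H2 x).
    { destruct (Rle_or_lt ((r0 ^ m) ^ 2) (H2 x)) as [|Hlt]; auto. exfalso.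
      destruct (continuity_ab_min H2 b x) as [a0 [Ha0 Ha0r]]; [lra| |].
      { intros c Hc. apply cont_of_der. eexists. apply HdH2. lra. }
      assert (HH2b : H2 b = (r0 ^ m) ^ 2). { unfold H2. fold r0. rewrite Hdb. field. }
      assert (Ha0x : H2 a0 <= H2 x) by (apply Ha0; lra).
      assert (Hab : b < a0). { destruct Ha0r as [[Hab|Hab] _]; auto. subst a0. lra. }
      assert (Hua := Hpos a0 ltac:(lra)). assert (Hwa := Hw a0 ltac:(lra)).
      assert (0 < u a0 ^ m) by (apply pow_lt; lra).
      assert (0 < 1 + Derive u a0 ^ 2) by (assert (0 <= Derive u a0 ^ 2) by apply pow2_ge_0; lra).
      destruct Ha0r as [_ [Hax|Hax]].
      - assert (E1 : 0 <= dH2 a0).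
        { apply (min_right H2 a0 (dH2 a0) (x - a0)); [apply HdH2; lra|lra|]. intros y Hy. apply Ha0; lra. }
        assert (E2 : dH2 a0 <= 0).
        { apply (min_left H2 a0 (dH2 a0) (a0 - b)); [apply HdH2; lra|lra|]. intros y Hy. apply Ha0; lra. }
        assert (E3 : dH2 a0 = 0) by lra.
        unfold dH2 in E3.
        assert (Hda : Derive u a0 = 0).
        { destruct (Req_dec (Derive u a0) 0) as [|Hne]; auto. exfalso.
          assert (Hz : - Derive u a0 * (u a0 ^ m) ^ 2 * (a0 * Derive u a0 - u a0) = 0).
          { replace (- Derive u a0 * (u a0 ^ m) ^ 2 * (a0 * Derive u a0 - u a0)) with
              (- Derive u a0 * (u a0 ^ m) ^ 2 * (a0 * Derive u a0 - u a0) / (1 + Derive u a0 ^ 2) * (1 + Derive u a0 ^ 2)) by (field; lra).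
            rewrite E3. ring. }
          apply Rmult_integral in Hz. destruct Hz as [Hz|Hz]; [|lra].
          apply Rmult_integral in Hz. destruct Hz as [Hz|Hz]; [lra|nra]. }
        assert (HH2a : H2 a0 = (u a0 ^ m) ^ 2) by (unfold H2; rewrite Hda; field).
        assert (r0 ^ m <= u a0 ^ m) by (apply pow_incr; split; [lra|apply Hr; lra]).
        assert (0 < r0 ^ m) by (apply pow_lt; lra).
        nra.
      - subst a0.
        assert (E2 : dH2 x <= 0).
        { apply (min_left H2 x (dH2 x) (x - b)); [apply HdH2; lra|lra|]. intros y Hy. apply Ha0; lra. }
        unfold dH2 in E2.
        assert (0 < - Derive u x * (u x ^ m) ^ 2 * (x * Derive u x - u x)) by
          (assert (0 < (u x ^ m) ^ 2) by nra; assert (Hwx := Hw x ltac:(lra));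
           replace (- Derive u x * (u x ^ m) ^ 2 * (x * Derive u x - u x)) with
             ((Derive u x * (u x ^ m) ^ 2) * (- (x * Derive u x - u x))) by ring;
           apply Rmult_lt_0_compat; [apply Rmult_lt_0_compat|]; lra).
        assert (0 < - Derive u x * (u x ^ m) ^ 2 * (x * Derive u x - u x) / (1 + Derive u x ^ 2))
          by (apply Rdiv_lt_0_compat; lra).
        lra. }
    unfold H2 in Hkey.
    assert (0 < 1 + Derive u x ^ 2) by (assert (0 <= Derive u x ^ 2) by apply pow2_ge_0; lra).
    assert (Hk2 : (r0 ^ m) ^ 2 * (1 + Derive u x ^ 2) <= (u x ^ m) ^ 2).
    { replace ((u x ^ m) ^ 2) with ((u x ^ m) ^ 2 / (1 + Derive u x ^ 2) * (1 + Derive u x ^ 2)) by (field; lra).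
      apply Rmult_le_compat_r; lra. }
    nra. }
  set (F := fun y => r0 ^ m / u y ^ m + INR m * y / r0).
  set (dF := fun y => INR m * (u y ^ m * u y - r0 ^ m * Derive u y * r0) / (r0 * u y ^ m * u y)).
  set (xs := b + r0 / (2 * INR m)).
  assert (Hxs : b <= xs). { unfold xs. assert (0 < r0 / (2 * INR m)) by (apply Rdiv_lt_0_compat; fold m in Hm; lra). lra. }
  assert (HF : F b <= F xs).
  { apply (mono_le F dF b xs Hxs).
    - intros y Hy. assert (Huy := Hpos y ltac:(lra)). assert (0 < u y ^ m) by (apply pow_lt; lra).
      unfold F, dF. auto_derive.
      + repeat split; try (apply (D1 y); lra); change (u y * u y ^ k) with (u y ^ m); lra.
      + change (Derive (fun x0 => u x0) y) with (Derive u y). unfold m. change (match k with 0%nat => 1 | S _ => INR k + 1 end) with (INR (S k)). rewrite S_INR. simpl. simpl in H. field. repeat split; try lra. apply pow_nonzero; lra.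
    - intros y Hy. assert (Huy := Hpos y ltac:(lra)). assert (0 < u y ^ m) by (apply pow_lt; lra).
      assert (Hb2 := Hbound y ltac:(lra)). assert (Hry := Hr y ltac:(lra)).
      unfold dF. apply Rdiv_le_0_compat; [|apply Rmult_lt_0_compat; [apply Rmult_lt_0_compat|]; lra].
      apply Rmult_le_pos; [fold m in Hm; lra|]. nra. }
  assert (Hus := Hpos xs ltac:(lra)). assert (0 < u xs ^ m) by (apply pow_lt; lra).
  assert (Hrs := Hr xs Hxs).
  unfold F in HF.
  assert (HFb : r0 ^ m / u b ^ m = 1) by (fold r0; field; apply pow_nonzero; lra).
  rewrite HFb in HF.
  assert (Hhalf : INR m * xs / r0 = INR m * b / r0 + / 2).
  { unfold xs. field. fold m in Hm. lra. }
  rewrite Hhalf in HF.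
  assert (Hq : 1 / 2 <= r0 ^ m / u xs ^ m) by lra.
  assert (Hq2 : u xs ^ m <= 2 * r0 ^ m).
  { apply (Rmult_le_compat_r (u xs ^ m)) in Hq; [|lra].
    replace (r0 ^ m / u xs ^ m * u xs ^ m) with (r0 ^ m) in Hq by (field; lra). lra. }
  assert (Hq3 : u xs <= 2 * r0).
  { unfold m in Hq2. simpl in Hq2.
    assert (r0 ^ k <= u xs ^ k) by (apply pow_incr; lra).
    assert (0 < r0 ^ k) by (apply pow_lt; lra). nra. }
  assert (Hsx := Hge xs ltac:(lra)).
  assert (Hxs2 : r0 / (2 * INR m) <= xs) by (unfold xs; lra).
  assert (Hfin : s * (r0 / (2 * INR m)) <= 2 * r0) by nra.
  fold m in Hs4.
  fold m in Hm.
  assert (HE : s * (r0 / (2 * INR m)) * (2 * INR m) = s * r0) by (field; lra).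
  assert (HF2 : s * (r0 / (2 * INR m)) * (2 * INR m) <= 2 * r0 * (2 * INR m)) by (apply Rmult_le_compat_r; lra).
  rewrite HE in HF2.
  assert (s * r0 > 4 * INR m * r0) by (apply Rmult_gt_compat_r; lra).
  lra.
Qed.

Theorem lemma7 (n : nat) (hn : (2 <= n)%nat) :
  exists sigma0 : R, forall sigma : R, 0 < sigma -> sigma0 < sigma ->
    forall u : R -> R,
      is_u_sigma n sigma u ->
      (forall v : R -> R, is_u_sigma n sigma v -> forall x : R, 0 <= x -> v x = u x) ->
      forall x : R, 0 <= x -> 0 < Derive u x.
Proof.
  destruct n as [|[|k]]; [lia|lia|].
  exists (4 * INR (S k)).
  intros s Hs Hs0 u Hu _ x Hx.
  destruct Hu as [[eps [Heps Hsm]] [Hpos [Hode Hlim]]].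
  apply (slope_pos k s u eps); auto.
  repeat split; auto.
  - intros y Hy. exact (Hsm 1%nat y Hy).
  - intros y Hy. exact (Hsm 2%nat y Hy).
  - intros y Hy. specialize (Hode y Hy). change (Derive_n u 2 y) with (Derive (Derive u) y) in Hode.
    rewrite Hode. replace (INR (S (S k)) - 1) with (INR (S k)) by (rewrite (S_INR (S k)); ring). reflexivity.
  - apply (lim_ev (fun y => u y - s * y)). exact Hlim.
Qed.
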